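(* Consider a state-dependent discrete memoryless channel $W_{Y,Z|X,S}$ with finite alphabets, i.i.d. state distribution $Q_S$, innocent symbol $x_0$, and strictly causal channel state information available only at the transmitter (encoder $X_i=f_i(M,S^{i-1})$, decoder $Y^n\mapsto\hat M$). Let $\mathcal D$ be the set of joint pmfs $P_{S,X,Y,Z}=Q_SP_XW_{Y,Z|X,S}$ such that $P_Z=Q_0$ and $\mathbb I(X;Y)>\mathbb I(X;Z)$. Let $\mathcal S=\{R\ge0:\exists P\in\mathcal D\text{ with }R\le\mathbb I(X;Y)\}$. Then the covert capacity satisfies $C_{\mathrm{SC\text{-}T}}\ge\max\{x:x\in\mathcal S\}$.
   Context: Finite alphabets $\mathcal S,\mathcal X,\mathcal Y,\mathcal Z$. The channel has transition pmf $W_{Y,Z|X,S}$: input $X$, state $S$, output $Y$ at the legitimate receiver and output $Z$ at an adversary (warden). The state sequence $S^n$ is i.i.d. with pmf $Q_S$ and independent of the message; neither the legitimate receiver nor the warden knows the state. $x_0\in\mathcal X$ is a fixed innocent symbol, and $Q_0(z)=\sum_{s}Q_S(s)W_{Z|X,S}(z|x_0,s)$, assumed to have full support on $\mathcal Z$. A $(2^{nR},n)$ code consists of a message $M$ uniform on $\{1,\dots,2^{nR}\}$, an encoder and a decoder of the type specified. $P_{Z^n}$ denotes the distribution of the warden's output induced by the code. A rate $R$ is achievable if there is a sequence of $(2^{nR},n)$ codes with $\mathbb P(\hat M\ne M)\to 0$ and $\mathbb D(P_{Z^n}\|Q_0^{\otimes n})\to 0$ as $n\to\infty$; the covert capacity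 is the supremum of achievable rates. Mutual informations are computed under the indicated joint pmf. *)

(* Defs.v *)
From HB Require Import structures.
From mathcomp Require Import all_boot all_order all_algebra.
From mathcomp Require Import all_classical all_reals.
From mathcomp Require Import ereal topology normedtype sequences exp.
Set Implicit Arguments. Unset Strict Implicit. Unset Printing Implicit Defensive.
Import Order.TTheory GRing.Theory Num.Theory.
Import numFieldNormedType.Exports.
Local Open Scope ring_scope.
Local Open Scope classical_set_scope.

Section Covert.
Variables (R : realType) (S X Y Z : finType).

Definition is_pmf (T : finType) (P : T -> R) :=
  (forall t, 0 <= P t) /\ \sum_(t : T) P t = 1.

(* channel W x s y z = W_{Y,Z|X,S}(y,z|x,s) *)
Definition is_channel (W : X -> S -> Y -> Z -> R) :=
  forall x s, (forall y z, 0 <= W x s y z) /\ \sum_(y : Y) \sum_(z : Z) W x s y z = 1.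

Definition log2 (r : R) : R := ln r / ln 2.

Definition mutinfo (A B : finType) (PAB : A -> B -> R) : R :=
  let PA a := \sum_(b : B) PAB a b in
  let PB b := \sum_(a : A) PAB a b in
  \sum_(a : A) \sum_(b : B)
     (if PAB a b == 0 then 0 else PAB a b * log2 (PAB a b / (PA a * PB b))).

(* Kullback-Leibler divergence in nats, convention 0 log(0/q) = 0 *)
Definition KL (T : finType) (P Q : T -> R) : R :=
  \sum_(t : T) (if P t == 0 then 0 else P t * ln (P t / Q t)).

Variables (QS : S -> R) (W : X -> S -> Y -> Z -> R) (x0 : X).

Definition Q0 (z : Z) : R := \sum_(s : S) QS s * \sum_(y : Y) W x0 s y z.

Definition PXY (PX : X -> R) (x : X) (y : Y) : R :=
  \sum_(s : S) \sum_(z : Z) QS s * PX x * W x s y z.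
Definition PXZ (PX : X -> R) (x : X) (z : Z) : R :=
  \sum_(s : S) \sum_(y : Y) QS s * PX x * W x s y z.
Definition PZ (PX : X -> R) (z : Z) : R := \sum_(x : X) PXZ PX x z.

(* the set D (parametrised by P_X, since P = Q_S P_X W) *)
Definition setD (PX : X -> R) : Prop :=
  is_pmf PX /\ (forall z, PZ PX z = Q0 z) /\
  mutinfo (PXZ PX) < mutinfo (PXY PX).

Definition setS : set R :=
  [set r | 0 <= r /\ exists PX, setD PX /\ r <= mutinfo (PXY PX)].

(* (M, n) code with strictly causal state information at the transmitter:
   X_i = enc i m s^n where enc i m s depends only on s_0 .. s_{i-1}. *)
Record sc_code (n M : nat) := SCCode {
  enc : 'I_n -> 'I_M -> {ffun 'I_n -> S} -> X;
  dec : {ffun 'I_n -> Y} -> 'I_M;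
  enc_causal : forall (i : 'I_n) (m : 'I_M) (s s' : {ffun 'I_n -> S}),
      (forall j : 'I_n, (j < i)%N -> s j = s' j) -> enc i m s = enc i m s' }.

Definition code_joint n M (c : sc_code n M) (m : 'I_M) (s : {ffun 'I_n -> S})
    (y : {ffun 'I_n -> Y}) (z : {ffun 'I_n -> Z}) : R :=
  M%:R^-1 * \prod_(i : 'I_n) (QS (s i) * W (enc c i m s) (s i) (y i) (z i)).

Definition err_prob n M (c : sc_code n M) : R :=
  \sum_(m : 'I_M) \sum_(s : {ffun 'I_n -> S}) \sum_(y : {ffun 'I_n -> Y})
     \sum_(z : {ffun 'I_n -> Z}) (if dec c y != m then code_joint c m s y z else 0).

Definition PZn n M (c : sc_code n M) (z : {ffun 'I_n -> Z}) : R :=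
  \sum_(m : 'I_M) \sum_(s : {ffun 'I_n -> S}) \sum_(y : {ffun 'I_n -> Y})
     code_joint c m s y z.

Definition Q0n n (z : {ffun 'I_n -> Z}) : R := \prod_(i : 'I_n) Q0 (z i).

Definition achievable (r : R) : Prop :=
  exists (Mn : nat -> nat) (c : forall n, sc_code n (Mn n)),
    (forall n, 2 `^ (n%:R * r) <= (Mn n)%:R) /\
    ((fun n => err_prob (c n)) @ \oo --> (0 : R)) /\
    ((fun n => KL (PZn (c n)) (@Q0n n)) @ \oo --> (0 : R)).

Definition covert_capacity : \bar R := ereal_sup [set r%:E | r in achievable].

End Covert.

(* Main.v *)
Require Import Defs.
From HB Require Import structures.
From mathcomp Require Import all_boot all_order all_algebra.
From mathcomp Require Import all_classical all_reals.
From mathcomp Require Import ereal topology normedtype sequences exp.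
From mathcomp Require Import lra ring.
Import Order.TTheory GRing.Theory Num.Theory.
Import numFieldNormedType.Exports.
Local Open Scope ring_scope.
Local Open Scope classical_set_scope.


Section Analytic.
Variable R : realType.

Lemma ln_le_sub1 (t : R) : 0 < t -> ln t <= t - 1.
Proof.
move=> t0; have := @le_ln1Dx R (t - 1); rewrite (addrC 1) subrK; apply; lra.
Qed.

Lemma expR_le_quad (x : R) : x <= 1/2 -> expR x <= 1 + x + 2 * x^+2.
Proof.
move=> hx.
have h := expR_ge1Dx (- x).
have e1 : expR x * expR (- x) = 1 by rewrite expRxMexpNx_1.
have B0 : 0 <= 1 + x + 2 * x^+2 by nra.
have h2 : 1 <= (1 + x + 2 * x^+2) * expR (- x).
  apply: (le_trans _ (ler_wpM2l B0 h)); nra.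
have ep : 0 < expR (- x) by apply: expR_gt0.
have : expR x * expR (- x) <= (1 + x + 2 * x^+2) * expR (- x) by rewrite e1.
by rewrite ler_pM2r.
Qed.

Lemma ln1Dexp (t l : R) : 0 < l -> l <= 1 -> ln (1 + expR t) <= expR (l * t) / l.
Proof.
move=> l0 l1.
have et := expR_gt0 t.
have elt := expR_gt0 (l * t).
rewrite ler_pdivlMr //.
case: (lerP t 0) => ht.
- have h1 : ln (1 + expR t) <= expR t by apply: le_ln1Dx; lra.
  have h2 : expR t <= expR (l * t) by rewrite ler_expR; nra.
  have h0 : 0 <= ln (1 + expR t) by apply: ln_ge0; lra.
  apply: (le_trans _ (le_trans h1 h2)).
  by rewrite ler_piMr.
- have e1 : 1 <= expR t by have := expR_ge1Dx t; lra.
  have h1 : ln (1 + expR t) <= ln 2 + t.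
    have -> : ln 2 + t = ln (2 * expR t) by rewrite lnM ?posrE ?expRK //.
    rewrite ler_ln ?posrE; lra.
  have h2 : ln (2 : R) <= 1 by have := @ln_le_sub1 2 (ltr0Sn R 1); lra.
  have h3 := expR_ge1Dx (l * t).
  nra.
Qed.


Lemma small_moment (I : finType) (p v : I -> R) (eps : R) :
  (forall i, 0 <= p i) -> \sum_i p i = 1 -> 0 < eps ->
  exists l, [/\ 0 < l, l <= 1 &
    \sum_i p i * expR (l * v i) <= expR (l * (\sum_i p i * v i + eps))].
Proof.
move=> p0 p1 e0.
pose B := \sum_i `|v i| + 1.
have vB : forall i, `|v i| <= B - 1.
  move=> i; rewrite /B addrK (bigD1 i) //= lerDl; exact: sumr_ge0.
have B1 : 1 <= B by rewrite /B lerDr; exact: sumr_ge0.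
pose D := 2 * B^+2 / eps + 2 * B.
have D0 : 0 < D by rewrite /D; apply: ltr_wpDl; [apply: divr_ge0; nra | nra].
pose l := D^-1.
have l0 : 0 < l by rewrite invr_gt0.
have lD : l * D = 1 by rewrite mulVf // gt_eqF.
have hB2 : 0 <= 2 * B^+2 / eps by apply: divr_ge0; nra.
have lB : l * B <= 1/2.
  have : l * (2 * B) <= 1 by rewrite -[X in _ <= X]lD ler_pM2l // /D lerDr.
  lra.
have lB2 : 2 * l * B^+2 <= eps.
  have : l * (2 * B^+2 / eps) <= 1 by rewrite -[X in _ <= X]lD ler_pM2l // /D lerDl; nra.
  rewrite mulrA ler_pdivrMr // mul1r; nra.
exists l; split => //; first by have := lB; nra.
have step : forall i, p i * expR (l * v i) <= p i + l * (p i * v i) + (2 * l^+2 * B^+2) * p i.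
  move=> i; have hv := vB i.
  have hv' : - B <= v i <= B by rewrite -ler_norml; lra.
  have lv : l * v i <= 1/2 by nra.
  have := @expR_le_quad (l * v i) lv.
  have : (l * v i)^+2 <= l^+2 * B^+2.
    have vv : v i ^+ 2 <= B ^+ 2 by nra.
    by rewrite exprMn ler_pM2l ?exprn_gt0.
  have := p0 i; nra.
apply: (le_trans (ler_sum _ (fun i _ => step i))).
rewrite !big_split /= -!mulr_sumr p1.
apply: (le_trans _ (expR_ge1Dx _)).
nra.
Qed.


Lemma gibbs (I : finType) (p q : I -> R) :
  (forall i, 0 <= p i) -> \sum_i p i = 1 -> (forall i, 0 <= q i) ->
  \sum_i q i <= 1 -> (forall i, p i != 0 -> 0 < q i) ->
  0 <= \sum_i (if p i == 0 then 0 else p i * ln (p i / q i)).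
Proof.
move=> p0 p1 q0 q1 pq.
have step : forall i, p i - q i <= (if p i == 0 then 0 else p i * ln (p i / q i)).
  move=> i; case: eqP => [->|/eqP pn0]; first by have := q0 i; lra.
  have pp : 0 < p i by rewrite lt0r pn0 p0.
  have qp := pq i pn0.
  have h := @ln_le_sub1 _ (divr_gt0 qp pp).
  have -> : ln (p i / q i) = - ln (q i / p i).
    by rewrite -lnV ?posrE ?divr_gt0 // invf_div.
  have : p i * ln (q i / p i) <= p i * (q i / p i - 1) by rewrite ler_pM2l.
  rewrite mulrBr mulrCA divff ?mulr1 //; lra.
apply: (le_trans _ (ler_sum _ (fun i _ => step i))).
rewrite sumrB p1; lra.
Qed.

Lemma sum_prod1 (I T : finType) (F : I -> T -> R) :
  \sum_(f : {ffun I -> T}) \prod_i F i (f i) = \prod_i \sum_t F i t.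
Proof. by rewrite bigA_distr_bigA. Qed.

Lemma sum_prod2 (I T U : finType) (F : I -> T -> U -> R) :
  \sum_(f : {ffun I -> T}) \sum_(g : {ffun I -> U}) \prod_i F i (f i) (g i)
   = \prod_i \sum_t \sum_u F i t u.
Proof.
rewrite -sum_prod1; apply: eq_bigr => f _.
by rewrite (@sum_prod1 _ _ (fun i u => F i (f i) u)).
Qed.

Lemma Egen (I T : finType) (p : T -> R) (G : I -> T -> R) :
  \sum_(c : {ffun I -> T}) (\prod_i p (c i)) * \prod_i G i (c i)
   = \prod_i \sum_t p t * G i t.
Proof.
rewrite bigA_distr_bigA; apply: eq_bigr => c _; by rewrite -big_split.
Qed.

Lemma prod_if1 (I : finType) (m : I) (f : I -> R) :
  \prod_i (if i == m then f i else 1) = f m.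
Proof. by rewrite -big_mkcond big_pred1_eq. Qed.

Lemma prod_if2 (I : finType) (m j : I) (f g : I -> R) : j != m ->
  \prod_i (if i == m then f i else if i == j then g i else 1) = f m * g j.
Proof.
move=> jm; rewrite (bigD1 m) //= eqxx; congr (_ * _).
rewrite (bigD1 j) //= (negPf jm) eqxx big1 ?mulr1 //.
by move=> i /andP[/negPf -> /negPf ->].
Qed.

Lemma E1 (I T : finType) (p : T -> R) (G : T -> R) (m : I) :
  \sum_t p t = 1 ->
  \sum_(c : {ffun I -> T}) (\prod_i p (c i)) * G (c m) = \sum_t p t * G t.
Proof.
move=> p1.
transitivity (\sum_(c : {ffun I -> T}) (\prod_i p (c i)) *
    \prod_i (fun i t => if i == m then G t else 1) i (c i)).
  by apply: eq_bigr => c _; rewrite /= (@prod_if1 I m (fun i => G (c i))).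
rewrite (@Egen I T p (fun i t => if i == m then G t else 1)).
have h : forall i, \sum_t p t * (if i == m then G t else 1)
   = if i == m then \sum_t p t * G t else 1.
  by move=> i; case: (i == m) => //; under eq_bigr do rewrite mulr1.
under eq_bigr do rewrite h.
exact: (@prod_if1 I m (fun _ => \sum_t p t * G t)).
Qed.

Lemma E2 (I T : finType) (p : T -> R) (G H : T -> R) (m j : I) :
  \sum_t p t = 1 -> j != m ->
  \sum_(c : {ffun I -> T}) (\prod_i p (c i)) * (G (c m) * H (c j))
   = (\sum_t p t * G t) * (\sum_t p t * H t).
Proof.
move=> p1 jm.
transitivity (\sum_(c : {ffun I -> T}) (\prod_i p (c i)) *
    \prod_i (fun i t => if i == m then G t else if i == j then H t else 1) i (c i)).
  by apply: eq_bigr => c _; rewrite /= (@prod_if2 I m j (fun i => G (c i)) (fun i => H (c i)) jm).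
rewrite (@Egen I T p (fun i t => if i == m then G t else if i == j then H t else 1)).
have h : forall i, \sum_t p t * (if i == m then G t else if i == j then H t else 1)
   = if i == m then \sum_t p t * G t else if i == j then \sum_t p t * H t else 1.
  by move=> i; case: (i == m) => //; case: (i == j) => //; under eq_bigr do rewrite mulr1.
under eq_bigr do rewrite h.
exact: (@prod_if2 I m j (fun _ => \sum_t p t * G t) (fun _ => \sum_t p t * H t) jm).
Qed.

Lemma E0 (I T : finType) (p : T -> R) :
  \sum_t p t = 1 -> \sum_(c : {ffun I -> T}) \prod_i p (c i) = 1.
Proof.
move=> p1; rewrite (@sum_prod1 I T (fun _ t => p t)) big1 // => i _ //.
Qed.

Lemma small_moment2 (A B : finType) (p v : A -> B -> R) (eps : R) :
  (forall a b, 0 <= p a b) -> \sum_a \sum_b p a b = 1 -> 0 < eps ->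
  exists l, [/\ 0 < l, l <= 1 &
    \sum_a \sum_b p a b * expR (l * v a b)
      <= expR (l * (\sum_a \sum_b p a b * v a b + eps))].
Proof.
move=> p0 p1 e0.
have p1' : \sum_(u : A * B) p u.1 u.2 = 1 by rewrite -p1 pair_bigA.
have [l [l0 l1 h]] := @small_moment (A * B)%type (fun u => p u.1 u.2)
   (fun u => v u.1 u.2) eps (fun u => p0 u.1 u.2) p1' e0.
exists l; split => //.
by rewrite (pair_bigA _ (fun a b => p a b * expR (l * v a b)))
           (pair_bigA _ (fun a b => p a b * v a b)).
Qed.

Lemma prodM (I : finType) (F G : I -> R) :
  \prod_i F i * \prod_i G i = \prod_i (F i * G i).
Proof. by rewrite big_split. Qed.

End Analytic.


Section Channel.
Variables (R : realType) (S X Y Z : finType) (QS : S -> R)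
  (W : X -> S -> Y -> Z -> R) (x0 : X).
Hypotheses (hQS : is_pmf QS) (hW : is_channel W).
Variable PX : X -> R.
Hypothesis hPX : is_pmf PX.
Hypothesis hPZ : forall z, PZ QS W PX z = Q0 QS W x0 z.
Hypothesis hQ0 : forall z, 0 < Q0 QS W x0 z.

Definition VY x y := \sum_s \sum_z QS s * W x s y z.
Definition VZ x z := \sum_s \sum_y QS s * W x s y z.
Definition PYm y := \sum_x PX x * VY x y.

Lemma QS0 s : 0 <= QS s. Proof. by case: hQS. Qed.
Lemma PX0 x : 0 <= PX x. Proof. by case: hPX. Qed.
Lemma W0 x s y z : 0 <= W x s y z. Proof. by case: (hW x s) => h _; apply: h. Qed.

Lemma VY0 x y : 0 <= VY x y.
Proof. by apply: sumr_ge0 => s _; apply: sumr_ge0 => z _; rewrite mulr_ge0 ?QS0 ?W0. Qed.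
Lemma VZ0 x z : 0 <= VZ x z.
Proof. by apply: sumr_ge0 => s _; apply: sumr_ge0 => y _; rewrite mulr_ge0 ?QS0 ?W0. Qed.

Lemma sumVY x : \sum_y VY x y = 1.
Proof.
rewrite /VY exchange_big /=; case: hQS => _ <-; apply: eq_bigr => s _.
under eq_bigr do rewrite -mulr_sumr.
by rewrite -mulr_sumr; case: (hW x s) => _ ->; rewrite mulr1.
Qed.

Lemma sumVZ x : \sum_z VZ x z = 1.
Proof.
rewrite /VZ exchange_big /=; case: hQS => _ <-; apply: eq_bigr => s _.
under eq_bigr do rewrite -mulr_sumr.
by rewrite -mulr_sumr exchange_big /=; case: (hW x s) => _ ->; rewrite mulr1.
Qed.

Lemma PXY_eq x y : PXY QS W PX x y = PX x * VY x y.
Proof.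
rewrite /PXY /VY mulr_sumr; apply: eq_bigr => s _; rewrite mulr_sumr.
by apply: eq_bigr => z _; rewrite mulrCA mulrA.
Qed.

Lemma PXZ_eq x z : PXZ QS W PX x z = PX x * VZ x z.
Proof.
rewrite /PXZ /VZ mulr_sumr; apply: eq_bigr => s _; rewrite mulr_sumr.
by apply: eq_bigr => y _; rewrite mulrCA mulrA.
Qed.

Lemma Q0_eq z : Q0 QS W x0 z = \sum_x PX x * VZ x z.
Proof. by rewrite -hPZ /PZ; apply: eq_bigr => x _; rewrite PXZ_eq. Qed.

Lemma PYm_pos {x y} : PX x * VY x y != 0 -> 0 < PYm y.
Proof.
move=> h; rewrite /PYm (bigD1 x) //=; apply: ltr_pwDl.
  by rewrite lt0r h mulr_ge0 ?PX0 ?VY0.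
by apply: sumr_ge0 => i _; rewrite mulr_ge0 ?PX0 ?VY0.
Qed.

Lemma mutY : ln 2 * mutinfo (PXY QS W PX) =
  \sum_x \sum_y (if PX x * VY x y == 0 then 0 else PX x * VY x y * ln (VY x y / PYm y)).
Proof.
have l2 : ln (2 : R) != 0 by rewrite gt_eqF // ln_gt0 // ltr1n.
rewrite /mutinfo mulr_sumr; apply: eq_bigr => x _; rewrite mulr_sumr.
apply: eq_bigr => y _; rewrite !PXY_eq.
case: eqP => [_|/eqP h]; first by rewrite mulr0.
have hx : PX x != 0 by apply: contra h => /eqP ->; rewrite mul0r.
have -> : \sum_b PXY QS W PX x b = PX x.
  by under eq_bigr do rewrite PXY_eq; rewrite -mulr_sumr sumVY mulr1.
have -> : \sum_a PXY QS W PX a y = PYm y by apply: eq_bigr => a _; rewrite PXY_eq.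
rewrite -mulf_div divff // mul1r /log2 mulrCA.
by rewrite [ln 2 * _]mulrCA mulfV // mulr1.
Qed.

Lemma mutZ : ln 2 * mutinfo (PXZ QS W PX) =
  \sum_x \sum_z (if PX x * VZ x z == 0 then 0
                 else PX x * VZ x z * ln (VZ x z / Q0 QS W x0 z)).
Proof.
have l2 : ln (2 : R) != 0 by rewrite gt_eqF // ln_gt0 // ltr1n.
rewrite /mutinfo mulr_sumr; apply: eq_bigr => x _; rewrite mulr_sumr.
apply: eq_bigr => z _; rewrite !PXZ_eq.
case: eqP => [_|/eqP h]; first by rewrite mulr0.
have hx : PX x != 0 by apply: contra h => /eqP ->; rewrite mul0r.
have -> : \sum_b PXZ QS W PX x b = PX x.
  by under eq_bigr do rewrite PXZ_eq; rewrite -mulr_sumr sumVZ mulr1.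
have -> : \sum_a PXZ QS W PX a z = Q0 QS W x0 z by rewrite -hPZ.
rewrite -mulf_div divff // mul1r /log2 mulrCA.
by rewrite [ln 2 * _]mulrCA mulfV // mulr1.
Qed.


Definition aY x y := if PX x * VY x y == 0 then 0 else ln (PYm y / VY x y).
Definition bZ x z := if PX x * VZ x z == 0 then 0 else ln (VZ x z / Q0 QS W x0 z).

Lemma PXVY_pos {x y} : PX x * VY x y != 0 -> 0 < PX x /\ 0 < VY x y.
Proof.
move=> h; have := PX0 x; have := VY0 x y.
rewrite !le0r; case/orP=> [/eqP e|->]; first by rewrite e mulr0 eqxx in h.
case/orP=> [/eqP e|->] //; by rewrite e mul0r eqxx in h.
Qed.

Lemma PXVZ_pos {x z} : PX x * VZ x z != 0 -> 0 < PX x /\ 0 < VZ x z.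
Proof.
move=> h; have := PX0 x; have := VZ0 x z.
rewrite !le0r; case/orP=> [/eqP e|->]; first by rewrite e mulr0 eqxx in h.
case/orP=> [/eqP e|->] //; by rewrite e mul0r eqxx in h.
Qed.

Lemma expR_aY {x y} : PX x * VY x y != 0 -> expR (aY x y) = PYm y / VY x y.
Proof.
move=> h; rewrite /aY (negPf h) lnK // posrE.
have [_ v] := PXVY_pos h; exact: divr_gt0 (PYm_pos h) v.
Qed.

Lemma expR_bZ {x z} : PX x * VZ x z != 0 -> expR (bZ x z) = VZ x z / Q0 QS W x0 z.
Proof.
move=> h; rewrite /bZ (negPf h) lnK // posrE.
have [_ v] := PXVZ_pos h; exact: divr_gt0 v (hQ0 z).
Qed.

Lemma expR0le (t : R) : 1 <= expR t -> 0 <= t.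
Proof. by move=> h; rewrite leNgt -expR_lt1 -leNgt. Qed.

Section Block.
Variables (n k : nat).
Local Notation M := k.+1.
Local Notation XS := {ffun 'I_n -> X}.
Local Notation YS := {ffun 'I_n -> Y}.
Local Notation ZS := {ffun 'I_n -> Z}.

Definition PXn (xs : XS) := \prod_i PX (xs i).
Definition VYn (xs : XS) (ys : YS) := \prod_i VY (xs i) (ys i).
Definition PYn (ys : YS) := \prod_i PYm (ys i).
Definition VZn (xs : XS) (zs : ZS) := \prod_i VZ (xs i) (zs i).

Lemma PXn0 xs : 0 <= PXn xs. Proof. by apply: prodr_ge0 => i _; apply: PX0. Qed.
Lemma VYn0 xs ys : 0 <= VYn xs ys. Proof. by apply: prodr_ge0 => i _; apply: VY0. Qed.
Lemma VZn0 xs zs : 0 <= VZn xs zs. Proof. by apply: prodr_ge0 => i _; apply: VZ0. Qed.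
Lemma PYm0 y : 0 <= PYm y.
Proof. by apply: sumr_ge0 => x _; rewrite mulr_ge0 ?PX0 ?VY0. Qed.
Lemma PYn0 ys : 0 <= PYn ys. Proof. by apply: prodr_ge0 => i _; apply: PYm0. Qed.
Lemma Q0n_pos (zs : ZS) : 0 < Q0n QS W x0 zs.
Proof. by apply: prodr_gt0 => i _; apply: hQ0. Qed.

Lemma sumPXn : \sum_xs PXn xs = 1.
Proof.
rewrite /PXn (@sum_prod1 R 'I_n X (fun _ x => PX x)) big1 // => i _.
by case: hPX.
Qed.

Lemma margY (ys : YS) : \sum_xs PXn xs * VYn xs ys = PYn ys.
Proof.
rewrite /PXn /VYn /PYn.
rewrite (eq_bigr (fun xs : XS => \prod_i (PX (xs i) * VY (xs i) (ys i)))); last by move=> xs _; rewrite big_split.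
by rewrite (@sum_prod1 R 'I_n X (fun i x => PX x * VY x (ys i))).
Qed.

Lemma margZ (zs : ZS) : \sum_xs PXn xs * VZn xs zs = Q0n QS W x0 zs.
Proof.
rewrite /PXn /VZn /Q0n.
rewrite (eq_bigr (fun xs : XS => \prod_i (PX (xs i) * VZ (xs i) (zs i)))); last by move=> xs _; rewrite big_split.
rewrite (@sum_prod1 R 'I_n X (fun i x => PX x * VZ x (zs i))).
by apply: eq_bigr => i _; rewrite Q0_eq.
Qed.

Lemma sumVYn (xs : XS) : \sum_ys VYn xs ys = 1.
Proof.
rewrite /VYn (@sum_prod1 R 'I_n Y (fun i y => VY (xs i) y)) big1 // => i _.
by rewrite sumVY.
Qed.

Definition mkcode (c : {ffun 'I_M -> XS}) (d : YS -> 'I_M) : sc_code S X Y n M :=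
  @SCCode S X Y n M (fun i m _ => c m i) d (fun _ _ _ _ _ => erefl).

Lemma err_eq c d : err_prob QS W (mkcode c d) =
  M%:R^-1 * \sum_m \sum_ys (if d ys != m then VYn (c m) ys else 0).
Proof.
rewrite /err_prob mulr_sumr; apply: eq_bigr => m _.
rewrite exchange_big /= mulr_sumr; apply: eq_bigr => ys _ /=.
case: (d ys != m); last by rewrite mulr0 big1 // => s _; rewrite big1.
rewrite /code_joint /=.
under eq_bigr do rewrite -mulr_sumr.
rewrite -mulr_sumr; congr (_ * _).
exact: (@sum_prod2 R 'I_n S Z (fun i s z => QS s * W (c m i) s (ys i) z)).
Qed.

Lemma PZn_eq c d (zs : ZS) : PZn QS W (mkcode c d) zs =
  \sum_m M%:R^-1 * VZn (c m) zs.
Proof.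
rewrite /PZn; apply: eq_bigr => m _.
rewrite /code_joint /=.
under eq_bigr do rewrite -mulr_sumr.
rewrite -mulr_sumr; congr (_ * _).
exact: (@sum_prod2 R 'I_n S Y (fun i s y => QS s * W (c m i) s y (zs i))).
Qed.


Definition Tst (K : R) (xs : XS) (ys : YS) : bool := K * PYn ys < VYn xs ys.
Definition dec (K : R) (c : {ffun 'I_M -> XS}) (ys : YS) : 'I_M :=
  odflt ord0 [pick m | Tst K (c m) ys].
Definition wt (c : {ffun 'I_M -> XS}) := \prod_m PXn (c m).
Lemma wt0 c : 0 <= wt c. Proof. by apply: prodr_ge0 => m _; apply: PXn0. Qed.

Lemma dec_bound K c ys m : ((dec K c ys != m)%:R : R) <=
  (~~ Tst K (c m) ys)%:R + \sum_(j | j != m) ((Tst K (c j) ys)%:R : R).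
Proof.
have s0 : 0 <= \sum_(j | j != m) ((Tst K (c j) ys)%:R : R) by apply: sumr_ge0 => j _; apply: ler0n.
rewrite /dec; case: pickP => [j hj|hnone] /=.
- case: (eqVneq j m) => [_|jm] /=.
    by apply: addr_ge0 => //; apply: ler0n.
  rewrite (bigD1 j) //= hj.
  have s1 : 0 <= \sum_(i | (i != m) && (i != j)) ((Tst K (c i) ys)%:R : R).
    by apply: sumr_ge0 => i _; apply: ler0n.
  have : (0 : R) <= (~~ Tst K (c m) ys)%:R by apply: ler0n.
  rewrite [true%:R]/= mulr1n; lra.
- rewrite hnone /=; case: (ord0 != m) => /=; lra.
Qed.

Lemma step1 K c : err_prob QS W (mkcode c (dec K c)) <= M%:R^-1 * \sum_m \sum_ys
   (VYn (c m) ys * (~~ Tst K (c m) ys)%:R +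
    \sum_(j | j != m) VYn (c m) ys * (Tst K (c j) ys)%:R).
Proof.
rewrite err_eq; apply: ler_wpM2l; first by rewrite invr_ge0 ler0n.
apply: ler_sum => m _; apply: ler_sum => ys _.
rewrite -mulr_sumr -mulrDr.
have h := dec_bound K c ys m.
have v0 := VYn0 (c m) ys.
case: (dec K c ys != m) h => /= h.
  by apply: ler_peMr.
by apply: mulr_ge0 => //; apply: le_trans h.
Qed.

Lemma step2 K m ys :
  \sum_c wt c * (VYn (c m) ys * (~~ Tst K (c m) ys)%:R +
     \sum_(j | j != m) VYn (c m) ys * (Tst K (c j) ys)%:R)
  <= \sum_xs PXn xs * (VYn xs ys * (~~ Tst K xs ys)%:R) +
     M%:R * (PYn ys * \sum_xs PXn xs * (Tst K xs ys)%:R).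
Proof.
under eq_bigr do rewrite mulrDr.
rewrite big_split /=.
rewrite (@E1 R 'I_M XS PXn (fun t => VYn t ys * (~~ Tst K t ys)%:R) m sumPXn).
apply: lerD => //.
under eq_bigr do rewrite mulr_sumr.
rewrite exchange_big /=.
rewrite (eq_bigr (fun _ => PYn ys * \sum_xs PXn xs * (Tst K xs ys)%:R)); last first.
  move=> j jm.
  rewrite (@E2 R 'I_M XS PXn (fun t => VYn t ys) (fun t => (Tst K t ys)%:R) m j sumPXn jm).
  by rewrite margY.
have b0 : 0 <= PYn ys * \sum_xs PXn xs * (Tst K xs ys)%:R.
  by apply: mulr_ge0; [apply: PYn0 | apply: sumr_ge0 => xs _; apply: mulr_ge0; [apply: PXn0 | apply: ler0n]].
have <- : \sum_(j < M) (PYn ys * \sum_xs PXn xs * (Tst K xs ys)%:R)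
   = M%:R * (PYn ys * \sum_xs PXn xs * (Tst K xs ys)%:R).
  by rewrite sumr_const card_ord mulr_natl.
by rewrite [X in _ <= X](bigD1 m) //= lerDr.
Qed.

Lemma sumB K : 0 < K ->
  \sum_ys PYn ys * \sum_xs PXn xs * (Tst K xs ys)%:R <= K^-1.
Proof.
move=> K0.
have -> : K^-1 = \sum_ys \sum_xs PXn xs * VYn xs ys / K.
  rewrite exchange_big /=.
  under eq_bigr do rewrite -mulr_suml -mulr_sumr sumVYn mulr1.
  by rewrite -mulr_suml sumPXn mul1r.
apply: ler_sum => ys _; rewrite mulr_sumr; apply: ler_sum => xs _.
rewrite /Tst; case: ltrP => h /=.
  rewrite mulr1 mulrC -mulrA ler_wpM2l ?PXn0 //.
  by rewrite ler_pdivlMr // mulrC ltW.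
rewrite mulr0 mulr0; apply: divr_ge0; [apply: mulr_ge0; [apply: PXn0|apply: VYn0] | exact: ltW].
Qed.

Lemma Eerr K : 0 < K ->
  \sum_c wt c * err_prob QS W (mkcode c (dec K c)) <=
  \sum_ys \sum_xs PXn xs * (VYn xs ys * (~~ Tst K xs ys)%:R) + M%:R / K.
Proof.
move=> K0.
apply: (le_trans (ler_sum _ (fun c _ => ler_wpM2l (wt0 c) (step1 K c)))).
under eq_bigr do rewrite mulrCA.
rewrite -mulr_sumr.
under eq_bigr do rewrite mulr_sumr.
rewrite exchange_big /=.
under eq_bigr => m _ do under eq_bigr => c _ do rewrite mulr_sumr.
under eq_bigr => m _ do rewrite exchange_big /=.
have Mp : (0 : R) < M%:R by rewrite ltr0n.
rewrite ler_pdivrMl //.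
apply: (le_trans (ler_sum _ (fun m _ => ler_sum _ (fun ys _ => step2 K m ys)))).
rewrite sumr_const card_ord -(mulr_natl (\sum_(i : YS) _) M) ler_pM2l //.
rewrite big_split /= -mulr_sumr lerD2l.
by rewrite ler_pM2l //; apply: sumB.
Qed.

Lemma prod_expR (F : 'I_n -> R) (l : R) :
  \prod_i expR (l * F i) = expR (l * \sum_i F i).
Proof. by rewrite mulr_sumr expR_sum. Qed.

Lemma termY K l (xs : XS) (ys : YS) : 0 < K -> 0 < l ->
  PXn xs * (VYn xs ys * (~~ Tst K xs ys)%:R) <=
  expR (l * ln K) * \prod_i (PX (xs i) * VY (xs i) (ys i) * expR (l * aY (xs i) (ys i))).
Proof.
move=> K0 l0.
pose P := \prod_i (PX (xs i) * VY (xs i) (ys i)).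
have eP : PXn xs * VYn xs ys = P by rewrite /PXn /VYn /P big_split.
have P0 : 0 <= P by rewrite -eP mulr_ge0 ?PXn0 ?VYn0.
rewrite big_split /= prod_expR mulrA eP -/P.
have b0 : (0 : R) <= (~~ Tst K xs ys)%:R by apply: ler0n.
have E0 : 0 < expR (l * ln K) by apply: expR_gt0.
case: (eqVneq P 0) => [->|Pn0]; first by rewrite !mul0r mulr0.
have Pp : 0 < P by rewrite lt0r Pn0.
have hn : forall i, PX (xs i) * VY (xs i) (ys i) != 0.
  by move=> i; move/prodf_neq0: Pn0; apply.
case hT: (Tst K xs ys) => /=.
  by rewrite mulr0; apply: mulr_ge0; [exact: ltW | apply: mulr_ge0 => //; exact: ltW (expR_gt0 _)].
rewrite mulr1 mulrCA -expRD -mulrDr.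
apply: ler_peMr => //.
have VYn_pos : 0 < VYn xs ys.
  by apply: prodr_gt0 => i _; have [_ ->] := PXVY_pos (hn i).
have key : 1 <= expR (ln K + \sum_i aY (xs i) (ys i)).
  rewrite expRD expR_sum lnK ?posrE //.
  rewrite (eq_bigr (fun i => PYm (ys i) / VY (xs i) (ys i))); last by move=> i _; rewrite expR_aY.
  rewrite prodf_div -/(PYn ys) -/(VYn xs ys) mulrA ler_pdivlMr // mul1r.
  by move: hT; rewrite /Tst => /negbT; rewrite -leNgt.
have h0 := @expR0le _ key.
apply: (le_trans _ (expR_ge1Dx _)); rewrite lerDl; exact: mulr_ge0 (ltW l0) h0.
Qed.

Lemma Abound K l : 0 < K -> 0 < l ->
  \sum_(ys : YS) \sum_(xs : XS) PXn xs * (VYn xs ys * (~~ Tst K xs ys)%:R) <=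
  expR (l * ln K) * (\sum_x \sum_y PX x * VY x y * expR (l * aY x y)) ^+ n.
Proof.
move=> K0 l0.
apply: (le_trans (ler_sum _ (fun ys _ => ler_sum _ (fun xs _ => @termY K l xs ys K0 l0)))).
under eq_bigr do rewrite -mulr_sumr.
rewrite -mulr_sumr exchange_big /=.
rewrite (@sum_prod2 R 'I_n X Y (fun _ x y => PX x * VY x y * expR (l * aY x y))).
by rewrite prodr_const card_ord.
Qed.

Lemma termZ l (xs : XS) (zs : ZS) : 0 < l -> l <= 1 ->
  PXn xs * (VZn xs zs * ln (1 + VZn xs zs / (M%:R * Q0n QS W x0 zs))) <=
  expR (- (l * ln M%:R)) / l *
    \prod_i (PX (xs i) * VZ (xs i) (zs i) * expR (l * bZ (xs i) (zs i))).
Proof.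
move=> l0 l1.
pose P := \prod_i (PX (xs i) * VZ (xs i) (zs i)).
have eP : PXn xs * VZn xs zs = P by rewrite /PXn /VZn /P big_split.
have P0 : 0 <= P by rewrite -eP mulr_ge0 ?PXn0 ?VZn0.
rewrite big_split /= prod_expR mulrA eP -/P.
have E0 : 0 < expR (- (l * ln M%:R)) / l by apply: divr_gt0 => //; apply: expR_gt0.
case: (eqVneq P 0) => [->|Pn0]; first by rewrite !mul0r mulr0.
have hn : forall i, PX (xs i) * VZ (xs i) (zs i) != 0.
  by move=> i; move/prodf_neq0: Pn0; apply.
have Mp : (0 : R) < M%:R by rewrite ltr0n.
have Qp := Q0n_pos zs.
have eT : VZn xs zs / (M%:R * Q0n QS W x0 zs) = expR (\sum_i bZ (xs i) (zs i) - ln M%:R).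
  rewrite expRD expR_sum expRN lnK ?posrE //.
  rewrite (eq_bigr (fun i => VZ (xs i) (zs i) / Q0 QS W x0 (zs i))); last by move=> i _; rewrite expR_bZ.
  by rewrite prodf_div /VZn /Q0n invfM; ring.
rewrite eT.
apply: (le_trans (ler_wpM2l P0 (@ln1Dexp R _ l l0 l1))).
rewrite mulrDr expRD mulrN.
have -> : expR (l * \sum_i bZ (xs i) (zs i)) * expR (- (l * ln M%:R)) / l
  = expR (- (l * ln M%:R)) / l * expR (l * \sum_i bZ (xs i) (zs i)).
  by ring.
by rewrite mulrCA.
Qed.

Lemma Zbound l : 0 < l -> l <= 1 ->
  \sum_(zs : ZS) \sum_(xs : XS)
     PXn xs * (VZn xs zs * ln (1 + VZn xs zs / (M%:R * Q0n QS W x0 zs))) <=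
  expR (- (l * ln M%:R)) / l * (\sum_x \sum_z PX x * VZ x z * expR (l * bZ x z)) ^+ n.
Proof.
move=> l0 l1.
apply: (le_trans (ler_sum _ (fun zs _ => ler_sum _ (fun xs _ => @termZ l xs zs l0 l1)))).
under eq_bigr do rewrite -mulr_sumr.
rewrite -mulr_sumr exchange_big /=.
rewrite (@sum_prod2 R 'I_n X Z (fun _ x z => PX x * VZ x z * expR (l * bZ x z))).
by rewrite prodr_const card_ord.
Qed.

Lemma klz (u : 'I_M -> R) (Q : R) : (forall m, 0 <= u m) -> 0 < Q ->
  (if \sum_m M%:R^-1 * u m == 0 then 0 else
     (\sum_m M%:R^-1 * u m) * ln ((\sum_m M%:R^-1 * u m) / Q))
  <= M%:R^-1 * \sum_m (u m * ln (1 + u m / (M%:R * Q)) +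
        u m * ((\sum_j M%:R^-1 * u j) / (Q + u m / M%:R) - 1)).
Proof.
move=> u0 hQ.
set P := \sum_m M%:R^-1 * u m.
have Mp : (0 : R) < M%:R by rewrite ltr0n.
have Mi : (0 : R) < M%:R^-1 by rewrite invr_gt0.
have t0 : forall m, 0 <= M%:R^-1 * u m by move=> m; rewrite mulr_ge0 ?u0 // ltW.
case: eqP => [P0 | /eqP Pn0].
  have uz : forall m, u m = 0.
    move=> m; have := @psumr_eq0P _ _ _ _ (fun i _ => t0 i) P0 m isT.
    by move/eqP; rewrite mulf_eq0 invr_eq0 pnatr_eq0 /= => /eqP.
  by rewrite big1 ?mulr0 // => m _; rewrite uz !mul0r add0r.
have Pp : 0 < P by rewrite lt0r Pn0 sumr_ge0.
rewrite {1}/P mulr_suml mulr_sumr; apply: ler_sum => m _.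
rewrite -mulrA; apply: ler_wpM2l; first exact: ltW.
case: (eqVneq (u m) 0) => [->|um0]; first by rewrite !mul0r add0r.
have up : 0 < u m by rewrite lt0r um0 u0.
have Dp : 0 < Q + u m / M%:R by apply: ltr_wpDr => //; apply: divr_ge0; [exact: ltW|exact: ltW].
rewrite -mulrDr; apply: ler_wpM2l; first exact: ltW.
have -> : P / Q = (1 + u m / (M%:R * Q)) * (P / (Q + u m / M%:R)).
  field; apply/and3P; split; rewrite ?gt_eqF //.
  have := ler0n R k; nra.
rewrite lnM ?posrE; last by apply: divr_gt0.
  by rewrite lerD2l; apply: ln_le_sub1; apply: divr_gt0.
by apply: ltr_wpDr => //; apply: divr_ge0; [exact: ltW|apply: mulr_ge0; exact: ltW].
Qed.

Definition Au (t : XS) (zs : ZS) :=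
  VZn t zs * ln (1 + VZn t zs / (M%:R * Q0n QS W x0 zs)).
Definition Bu (c : {ffun 'I_M -> XS}) m (zs : ZS) :=
  VZn (c m) zs * ((\sum_j M%:R^-1 * VZn (c j) zs) /
     (Q0n QS W x0 zs + VZn (c m) zs / M%:R) - 1).

Lemma KLc c d : KL (PZn QS W (mkcode c d)) (@Q0n R S X Y Z QS W x0 n) <=
  M%:R^-1 * \sum_m \sum_zs (Au (c m) zs + Bu c m zs).
Proof.
rewrite /KL; under eq_bigr do rewrite PZn_eq.
apply: (le_trans (ler_sum _ (fun zs _ =>
   @klz (fun m => VZn (c m) zs) _ (fun m => VZn0 (c m) zs) (Q0n_pos zs)))).
by rewrite -mulr_sumr exchange_big.
Qed.

Lemma EB m (zs : ZS) : \sum_c wt c * Bu c m zs <= 0.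
Proof.
set Q := Q0n QS W x0 zs.
have Qp : 0 < Q by apply: Q0n_pos.
have Mp : (0 : R) < M%:R by rewrite ltr0n.
pose G t := VZn t zs / (Q + VZn t zs / M%:R).
pose H t := M%:R^-1 * (G t * VZn t zs) - VZn t zs.
have Dp : forall t, 0 < Q + VZn t zs / M%:R.
  by move=> t; apply: ltr_wpDr => //; apply: divr_ge0; [apply: VZn0|exact: ltW].
have G0 : forall t, 0 <= G t by move=> t; apply: divr_ge0; [apply: VZn0|exact: ltW (Dp t)].
have eB : forall c, Bu c m zs = H (c m) +
    \sum_(j | j != m) M%:R^-1 * (G (c m) * VZn (c j) zs).
  move=> c; rewrite /Bu /H (bigD1 m) //=.
  set Sp := \sum_(j | j != m) M%:R^-1 * VZn (c j) zs.
  have -> : \sum_(j | j != m) M%:R^-1 * (G (c m) * VZn (c j) zs) = G (c m) * Sp.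
    by rewrite /Sp mulr_sumr; apply: eq_bigr => j _; rewrite mulrCA.
  have dn := gt_eqF (Dp (c m)).
  rewrite /G -/Q; field.
  have := ler0n R k; have := VZn0 (c m) zs; move=> h1 h2.
  by apply/andP; split; rewrite gt_eqF //; nra.
under eq_bigr do rewrite eB mulrDr mulr_sumr.
rewrite big_split /= (@E1 R 'I_M XS PXn H m sumPXn).
rewrite [X in _ + X]exchange_big /=.
rewrite [X in _ + X](eq_bigr (fun _ => M%:R^-1 * ((\sum_t PXn t * G t) * Q))); last first.
  move=> j jm; under eq_bigr do rewrite mulrCA.
  rewrite -mulr_sumr (@E2 R 'I_M XS PXn G (fun t => VZn t zs) m j sumPXn jm).
  by rewrite margZ.
have c0 : 0 <= M%:R^-1 * ((\sum_t PXn t * G t) * Q).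
  apply: mulr_ge0; first by rewrite invr_ge0 ler0n.
  by apply: mulr_ge0; [apply: sumr_ge0 => t _; apply: mulr_ge0; [apply: PXn0|apply: G0]|exact: ltW].
apply: (@le_trans _ _ (\sum_t PXn t * H t + \sum_(j < M) M%:R^-1 * ((\sum_t PXn t * G t) * Q))).
  by rewrite lerD2l [X in _ <= X](bigD1 m) //= lerDr.
rewrite sumr_const card_ord -(mulr_natl (M%:R^-1 * _) M) mulrA mulfV ?gt_eqF // mul1r.
rewrite mulr_suml -big_split /= big1 // => t _.
rewrite /H /G; have dn := gt_eqF (Dp t).
field.
have := ler0n R k; have := VZn0 t zs; move=> h1 h2.
by apply/andP; split; rewrite gt_eqF //; nra.
Qed.

Lemma EKL l (d : {ffun 'I_M -> XS} -> YS -> 'I_M) : 0 < l -> l <= 1 ->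
  \sum_c wt c * KL (PZn QS W (mkcode c (d c))) (@Q0n R S X Y Z QS W x0 n)
   <= expR (- (l * ln M%:R)) / l *
      (\sum_x \sum_z PX x * VZ x z * expR (l * bZ x z)) ^+ n.
Proof.
move=> l0 l1.
apply: (le_trans (ler_sum _ (fun c _ => ler_wpM2l (wt0 c) (KLc c (d c))))).
under eq_bigr do rewrite mulrCA.
rewrite -mulr_sumr.
under eq_bigr do rewrite mulr_sumr.
rewrite exchange_big /=.
under eq_bigr => m _ do under eq_bigr => c _ do rewrite mulr_sumr.
under eq_bigr => m _ do rewrite exchange_big /=.
apply: (@le_trans _ _ (M%:R^-1 * \sum_(m < M) \sum_(zs : ZS) \sum_(xs : XS) PXn xs * Au xs zs)).
  apply: ler_wpM2l; first by rewrite invr_ge0 ler0n.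
  apply: ler_sum => m _; apply: ler_sum => zs _.
  under eq_bigr do rewrite mulrDr.
  rewrite big_split /= (@E1 R 'I_M XS PXn (fun t => Au t zs) m sumPXn).
  by rewrite -[X in _ <= X]addr0 lerD2l EB.
rewrite sumr_const card_ord -(mulr_natl (\sum_(zs : ZS) _) M) mulrA mulVf ?gt_eqF ?ltr0n // mul1r.
exact: Zbound.
Qed.

Lemma exists_code K l1 l2 : 0 < K -> 0 < l1 -> 0 < l2 -> l2 <= 1 ->
  exists c : {ffun 'I_M -> XS},
    err_prob QS W (mkcode c (dec K c)) +
    KL (PZn QS W (mkcode c (dec K c))) (@Q0n R S X Y Z QS W x0 n) <=
    expR (l1 * ln K) * (\sum_x \sum_y PX x * VY x y * expR (l1 * aY x y)) ^+ n
    + M%:R / K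
    + expR (- (l2 * ln M%:R)) / l2 *
      (\sum_x \sum_z PX x * VZ x z * expR (l2 * bZ x z)) ^+ n.
Proof.
move=> K0 l10 l20 l21.
pose F c := err_prob QS W (mkcode c (dec K c)) +
    KL (PZn QS W (mkcode c (dec K c))) (@Q0n R S X Y Z QS W x0 n).
have hE : \sum_c wt c * F c <=
    expR (l1 * ln K) * (\sum_x \sum_y PX x * VY x y * expR (l1 * aY x y)) ^+ n
    + M%:R / K
    + expR (- (l2 * ln M%:R)) / l2 *
      (\sum_x \sum_z PX x * VZ x z * expR (l2 * bZ x z)) ^+ n.
  under eq_bigr do rewrite mulrDr.
  rewrite big_split /=; apply: lerD; last exact: EKL.
  apply: (le_trans (Eerr K K0)); rewrite lerD2r.
  exact: Abound.
pose c0 : {ffun 'I_M -> XS} := [ffun _ => [ffun _ => x0]].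
have [cm _ hmin] := @arg_minP _ _ _ c0 predT F isT.
exists cm; apply: le_trans hE; change (F cm <= \sum_c wt c * F c).
have w1 : \sum_c wt c = 1 by rewrite /wt; apply: E0; exact: sumPXn.
rewrite -[F cm]mul1r -w1 mulr_suml; apply: ler_sum => c _.
by apply: ler_wpM2l; [apply: wt0 | apply: hmin].
Qed.

End Block.

Arguments mkcode {n k}.
Arguments PXn {n}. Arguments VYn {n}. Arguments PYn {n}. Arguments VZn {n}.
Arguments Tst {n}.
Arguments dec {n k}.

Lemma sum_pxy : \sum_x \sum_y PX x * VY x y = 1.
Proof.
under eq_bigr do rewrite -mulr_sumr sumVY mulr1.
by case: hPX.
Qed.

Lemma sum_pxz : \sum_x \sum_z PX x * VZ x z = 1.
Proof.
under eq_bigr do rewrite -mulr_sumr sumVZ mulr1.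
by case: hPX.
Qed.

Lemma sumQ0 : \sum_z Q0 QS W x0 z = 1.
Proof.
under eq_bigr do rewrite Q0_eq.
by rewrite exchange_big /= sum_pxz.
Qed.

Lemma muY : \sum_x \sum_y PX x * VY x y * aY x y = - (ln 2 * mutinfo (PXY QS W PX)).
Proof.
rewrite mutY -sumrN; apply: eq_bigr => x _; rewrite -sumrN; apply: eq_bigr => y _.
rewrite /aY; case: eqP => [->|/eqP h]; first by rewrite mul0r oppr0.
have [_ v] := PXVY_pos h; have pp := PYm_pos h.
by rewrite -mulrN -lnV ?posrE ?divr_gt0 // invf_div.
Qed.

Lemma muZ : \sum_x \sum_z PX x * VZ x z * bZ x z = ln 2 * mutinfo (PXZ QS W PX).
Proof.
rewrite mutZ; apply: eq_bigr => x _; apply: eq_bigr => z _.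
by rewrite /bZ; case: eqP => [->|/eqP h]; rewrite ?mul0r ?mulr0.
Qed.

Lemma Iz_ge0 : 0 <= mutinfo (PXZ QS W PX).
Proof.
have l2 : 0 < ln (2 : R) by rewrite ln_gt0 // ltr1n.
rewrite -(pmulr_rge0 _ l2) mutZ.
pose p (u : X * Z) := PX u.1 * VZ u.1 u.2.
pose q (u : X * Z) := PX u.1 * Q0 QS W x0 u.2.
rewrite (pair_bigA _ (fun x z => if PX x * VZ x z == 0 then 0 else
     PX x * VZ x z * ln (VZ x z / Q0 QS W x0 z))).
have e : forall u, (if p u == 0 then 0 else p u * ln (p u / q u)) =
   (if PX u.1 * VZ u.1 u.2 == 0 then 0 else
     PX u.1 * VZ u.1 u.2 * ln (VZ u.1 u.2 / Q0 QS W x0 u.2)).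
  move=> u; rewrite /p /q; case: eqP => // /eqP h.
  have [pp _] := PXVZ_pos h.
  by rewrite -mulf_div divff ?gt_eqF // mul1r.
rewrite -(eq_bigr _ (fun u _ => e u)).
apply: gibbs.
- by move=> u; rewrite /p mulr_ge0 ?PX0 ?VZ0.
- by rewrite -(pair_bigA _ (fun x z => PX x * VZ x z)) sum_pxz.
- by move=> u; rewrite /q mulr_ge0 ?PX0 // ltW.
- rewrite -(pair_bigA _ (fun x z => PX x * Q0 QS W x0 z)).
  under eq_bigr do rewrite -mulr_sumr sumQ0 mulr1.
  by case: hPX => _ ->.
- move=> u h; have [pp _] := PXVZ_pos h; exact: mulr_gt0.
Qed.

Lemma sumVZn n (xs : {ffun 'I_n -> X}) : \sum_zs VZn xs zs = 1.
Proof.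
rewrite /VZn (@sum_prod1 R 'I_n Z (fun i z => VZ (xs i) z)) big1 // => i _.
by rewrite sumVZ.
Qed.

Lemma err_ge0 n k c d : 0 <= err_prob QS W (@mkcode n k c d).
Proof.
rewrite err_eq; apply: mulr_ge0; first by rewrite invr_ge0 ler0n.
apply: sumr_ge0 => m _; apply: sumr_ge0 => ys _; case: ifP => _ //.
exact: VYn0.
Qed.

Lemma KL_ge0 n k c d :
  0 <= KL (PZn QS W (@mkcode n k c d)) (@Q0n R S X Y Z QS W x0 n).
Proof.
rewrite /KL; apply: gibbs.
- move=> zs; rewrite PZn_eq; apply: sumr_ge0 => m _.
  by apply: mulr_ge0; [rewrite invr_ge0 ler0n | apply: VZn0].
- under eq_bigr do rewrite PZn_eq.
  rewrite exchange_big /=.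
  under eq_bigr do rewrite -mulr_sumr sumVZn mulr1.
  by rewrite sumr_const card_ord -[_ *+ _]mulr_natr mulVf // pnatr_eq0.
- by move=> zs; apply: ltW; apply: Q0n_pos.
- rewrite /Q0n (@sum_prod1 R 'I_n Z (fun _ z => Q0 QS W x0 z)) big1 // => i _.
  by rewrite sumQ0.
- by move=> zs _; apply: Q0n_pos.
Qed.

Lemma expRn (x : R) (n : nat) : expR (n%:R * x) = expR x ^+ n.
Proof. exact: expRM_natl. Qed.

Lemma rate_ach (r : R) : mutinfo (PXZ QS W PX) < r -> r < mutinfo (PXY QS W PX) ->
  achievable QS W x0 r.
Proof.
move=> hz hy.
have ln2p : 0 < ln (2:R) by rewrite ln_gt0 // ltr1n.
have Iz0 := Iz_ge0.
pose rho := r * ln 2.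
pose Iyn := ln 2 * mutinfo (PXY QS W PX).
pose Izn := ln 2 * mutinfo (PXZ QS W PX).
have h1 : Izn < rho by rewrite /Izn /rho; nra.
have h2 : rho < Iyn by rewrite /Iyn /rho; nra.
have rho0 : 0 <= rho by rewrite /rho mulr_ge0 // ?ltW //; apply: le_lt_trans hz.
pose b := (rho + Iyn) / 2.
pose e1 := (Iyn - b) / 2.
pose e2 := (rho - Izn) / 2.
have e1p : 0 < e1 by rewrite /e1 /b; lra.
have e2p : 0 < e2 by rewrite /e2; lra.
have [l1 [l1p l1le hg]] := @small_moment2 R X Y (fun x y => PX x * VY x y) aY e1
   (fun x y => mulr_ge0 (PX0 x) (VY0 x y)) sum_pxy e1p.
rewrite muY -/Iyn in hg.
have [l2 [l2p l2le hh]] := @small_moment2 R X Z (fun x z => PX x * VZ x z) bZ e2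
   (fun x z => mulr_ge0 (PX0 x) (VZ0 x z)) sum_pxz e2p.
rewrite muZ -/Izn in hh.
set gY := \sum_x \sum_y PX x * VY x y * expR (l1 * aY x y) in hg.
set hZ := \sum_x \sum_z PX x * VZ x z * expR (l2 * bZ x z) in hh.
have gY0 : 0 <= gY.
  by apply: sumr_ge0 => x _; apply: sumr_ge0 => y _; rewrite !mulr_ge0 ?PX0 ?VY0 ?expR_ge0.
have hZ0 : 0 <= hZ.
  by apply: sumr_ge0 => x _; apply: sumr_ge0 => z _; rewrite !mulr_ge0 ?PX0 ?VZ0 ?expR_ge0.
pose k n := Num.Def.trunc (expR (n%:R * rho)).
pose K n : R := expR (n%:R * b).
have Kp n : 0 < K n by apply: expR_gt0.
have hex n := @exists_code n (k n) (K n) l1 l2 (Kp n) l1p l2p l2le.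
pose cm n := sval (cid (hex n)).
have hcm n := svalP (cid (hex n)).
pose q1 := expR (l1 * (b - Iyn + e1)).
pose q2 := expR (rho - b).
pose q3 := expR (l2 * (Izn + e2 - rho)).
pose q := Num.max q1 (Num.max q2 q3).
pose C := 1 + 2 + l2^-1.
have bnd n : err_prob QS W (mkcode (cm n) (dec (K n) (cm n))) +
    KL (PZn QS W (mkcode (cm n) (dec (K n) (cm n)))) (@Q0n R S X Y Z QS W x0 n)
    <= C * q ^+ n.
  apply: (le_trans (hcm n)).
  have q1q : q1 <= q by rewrite /q !le_max lexx.
  have q2q : q2 <= q by rewrite /q !le_max lexx orbT.
  have q3q : q3 <= q by rewrite /q !le_max lexx !orbT.
  have q0 : 0 <= q1 by apply: expR_ge0.
  have q20 : 0 <= q2 by apply: expR_ge0.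
  have q30 : 0 <= q3 by apply: expR_ge0.
  have pw : forall a, 0 <= a -> a <= q -> a ^+ n <= q ^+ n.
    move=> a a0 aq; apply: lerXn2r => //; rewrite nnegrE //; exact: le_trans aq.
  have T1 : expR (l1 * ln (K n)) * gY ^+ n <= q1 ^+ n.
    rewrite /K expRK.
    apply: (@le_trans _ _ (expR (l1 * (n%:R * b)) * expR (l1 * (- Iyn + e1)) ^+ n)).
      apply: ler_wpM2l; first exact: expR_ge0.
      by apply: lerXn2r; rewrite ?nnegrE ?expR_ge0.
    rewrite /q1 -!expRn -expRD ler_expR; nra.
  have T2 : (k n).+1%:R / K n <= 2 * q2 ^+ n.
    have kle : (k n)%:R <= expR (n%:R * rho) by rewrite truncn_le expR_ge0.
    have e1' : 1 <= expR (n%:R * rho).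
      by apply: (le_trans _ (expR_ge1Dx _)); rewrite lerDl mulr_ge0.
    have E : 2 * q2 ^+ n * K n = 2 * expR (n%:R * rho).
      by rewrite /q2 /K -expRn -mulrA -expRD mulrBr subrK.
    rewrite -natr1 ler_pdivrMr // E; lra.
  have T3 : expR (- (l2 * ln (k n).+1%:R)) / l2 * hZ ^+ n <= l2^-1 * q3 ^+ n.
    have Mge : expR (n%:R * rho) <= (k n).+1%:R by apply: ltW; apply: truncnS_gt.
    have lnMp : n%:R * rho <= ln (k n).+1%:R.
      by rewrite -[X in X <= _]expRK ler_ln ?posrE ?expR_gt0 ?ltr0n.
    apply: (@le_trans _ _ (expR (- (l2 * (n%:R * rho))) / l2 * expR (l2 * (Izn + e2)) ^+ n)).
      apply: ler_pM.
      - by apply: divr_ge0; [apply: expR_ge0 | exact: ltW].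
      - by apply: exprn_ge0.
      - apply: ler_wpM2r; first by rewrite invr_ge0 ltW.
        rewrite ler_expR; nra.
      - by apply: lerXn2r; rewrite ?nnegrE ?expR_ge0.
    rewrite /q3 -!expRn mulrAC -expRD mulrC ler_pM2l ?invr_gt0 // ler_expR; nra.
  have := pw _ q0 q1q; have := pw _ q20 q2q; have := pw _ q30 q3q.
  have : 0 <= l2^-1 by rewrite invr_ge0 ltW.
  rewrite /C; nra.
have qlt : `|q| < 1.
  have q0 : 0 <= q by rewrite /q !le_max expR_ge0.
  rewrite ger0_norm // /q !gt_max /q1 /q2 /q3 !expR_lt1.
  apply/and3P; split.
  - by rewrite pmulr_rlt0 // /e1 /b; lra.
  - by rewrite /b; lra.
  - by rewrite pmulr_rlt0 // /e2; lra.
have gcv := @cvg_geometric R C q qlt.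
exists (fun n => (k n).+1), (fun n => mkcode (cm n) (dec (K n) (cm n))).
split; [move=> n | split].
- rewrite /powR; case: eqP => [h|_]; first by move/eqP: h; rewrite pnatr_eq0.
  rewrite -mulrA -/rho; apply: ltW; exact: truncnS_gt.
- apply: (@squeeze_cvgr _ _ _ _ (fun _ => 0) (geometric C q)); last exact: gcv.
    apply: nearW => n /=; rewrite err_ge0 /=.
    apply: le_trans (bnd n); rewrite lerDl; exact: KL_ge0.
  exact: cvg_cst.
- apply: (@squeeze_cvgr _ _ _ _ (fun _ => 0) (geometric C q)); last exact: gcv.
    apply: nearW => n /=; rewrite KL_ge0 /=.
    apply: le_trans (bnd n); rewrite lerDr; exact: err_ge0.
  exact: cvg_cst.
Qed.

End Channel.


Theorem theorem11 (R : realType) (S X Y Z : finType) (QS : S -> R)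
  (W : X -> S -> Y -> Z -> R) (x0 : X)
  (hQS : is_pmf QS) (hW : is_channel W)
  (hQ0 : forall z, 0 < Q0 QS W x0 z)
  (rmax : R)
  (hmax : setS QS W x0 rmax /\ (forall r, setS QS W x0 r -> r <= rmax)) :
  (rmax%:E <= covert_capacity QS W x0)%E.
Proof.
case: hmax => [[r0 [PX [[hPX [hPZ hlt]] hr]]] _].
rewrite /covert_capacity.
apply/lee_addgt0Pr => e e0.
set Iy := mutinfo (PXY QS W PX) in hlt hr *.
set Iz := mutinfo (PXZ QS W PX) in hlt.
pose d := Num.min (e / 2) ((Iy - Iz) / 2).
have d0 : 0 < d by rewrite /d lt_min; apply/andP; split; lra.
have de : d <= e / 2 by rewrite /d ge_min lexx.
have dI : d <= (Iy - Iz) / 2 by rewrite /d ge_min lexx orbT.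
have ach : achievable QS W x0 (Iy - d).
  apply: (@rate_ach R S X Y Z QS W x0 hQS hW PX hPX hPZ hQ0); rewrite -/Iy -/Iz; lra.
apply: (@le_trans _ _ ((Iy - d)%:E + e%:E)%E).
  by rewrite -EFinD lee_fin; lra.
apply: leeD2r; apply: le_ereal_sup_tmp.
by exists (Iy - d)%:E => //; exists (Iy - d).
Qed.
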